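(* Let $\mathcal{F}_1,\dots,\mathcal{F}_k$ be finite nonempty families of convex sets in $\mathbb{R}^d$ and let $b\in\mathbb{R}^d$. If for every transversal $\mathcal{T}$ of $\mathcal{F}_1,\dots,\mathcal{F}_k$ the set $K(\mathcal{T})$ intersects the closed Euclidean unit ball $B(b,1)$, then there exist $i\in[k]$ and a point $q\in\mathbb{R}^d$ such that $d(q,K)\le\frac1{\sqrt k}$ for all $K\in\mathcal{F}_i$.
   Context: A transversal of $\mathcal{F}_1,\dots,\mathcal{F}_k$ is $\mathcal{T}=(K_1,\dots,K_k)$ with $K_i\in\mathcal{F}_i$ for all $i$, and $K(\mathcal{T})=\bigcap_{i=1}^kK_i$. $B(b,1)$ is the closed Euclidean ball of centre $b$ and radius $1$; $d(q,K)$ is Euclidean distance from a point to a set. *)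

(* Defs.v *)
From HB Require Import structures.
From mathcomp Require Import all_boot all_order all_algebra.
From mathcomp Require Import all_classical all_reals all_analysis.
Set Implicit Arguments. Unset Strict Implicit. Unset Printing Implicit Defensive.
Import Order.TTheory GRing.Theory Num.Theory.
Local Open Scope classical_set_scope.
Local Open Scope ring_scope.

Definition enorm (R : realType) (d : nat) (v : 'rV[R]_d) : R :=
  Num.sqrt (\sum_(i < d) (v ord0 i) ^+ 2).

Definition eball (R : realType) (d : nat) (b : 'rV[R]_d) (r : R) : set 'rV[R]_d :=
  [set x | enorm (x - b) <= r].

Definition convexR (R : realType) (d : nat) (K : set 'rV[R]_d) : Prop :=
  @convex_set R 'rV[R]_d K.

(* Euclidean distance from a point to a set, in the extended reals
   (= +oo for the empty set). *)
Definition dist_to_set (R : realType) (d : nat) (q : 'rV[R]_d) (K : set 'rV[R]_d) : \bar R :=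
  ereal_inf [set (enorm (q - x))%:E | x in K].

Definition family_transversal (R : realType) (d k : nat)
  (F : 'I_k -> set (set 'rV[R]_d)) (T : 'I_k -> set 'rV[R]_d) : Prop :=
  forall i, F i (T i).

Definition Kof (R : realType) (d k : nat) (T : 'I_k -> set 'rV[R]_d) : set 'rV[R]_d :=
  \bigcap_(i in [set: 'I_k]) T i.

(* Main.v *)
Require Import Defs.
From HB Require Import structures.
From mathcomp Require Import all_boot all_order all_algebra.
From mathcomp Require Import all_classical all_reals all_analysis.
From mathcomp Require Import ring lra.
Import Order.TTheory GRing.Theory Num.Theory.
Local Open Scope classical_set_scope.
Local Open Scope ring_scope.
Set Implicit Arguments. Unset Strict Implicit. Unset Printing Implicit Defensive.

Section H.
Variables (R : realType) (d : nat).
Implicit Types a b u v x y z p : 'rV[R]_d.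

Definition sq v : R := \sum_(i < d) (v ord0 i) ^+ 2.
Definition dot u v : R := \sum_(i < d) u ord0 i * v ord0 i.

Lemma sq_ge0 v : 0 <= sq v.
Proof. by apply: sumr_ge0 => i _; rewrite sqr_ge0. Qed.

Lemma enorm_sq v : enorm v ^+ 2 = sq v.
Proof. by rewrite /enorm sqr_sqrtr // sq_ge0. Qed.

Lemma enorm_ge0 v : 0 <= enorm v.
Proof. exact: sqrtr_ge0. Qed.

Lemma sq_comb (al be : R) a b :
  sq (al *: a + be *: b) = al ^+ 2 * sq a + 2 * al * be * dot a b + be ^+ 2 * sq b.
Proof.
rewrite /sq /dot !mulr_sumr -!big_split /=; apply: eq_bigr => i _; rewrite !mxE; ring.
Qed.

Lemma sq_sym a b : sq (a - b) = sq (b - a).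
Proof. by rewrite /sq; apply: eq_bigr => i _; rewrite !mxE; ring. Qed.

Lemma convex_comb (K : set 'rV[R]_d) y p t : convexR K -> K y -> K p -> 0 <= t -> t <= 1 ->
  K (t *: y + (1 - t) *: p).
Proof.
move=> cK Ky Kp t0 t1.
have := cK y p (Itv01 t0 t1) (mem_set Ky) (mem_set Kp).
by move/set_mem.
Qed.

Lemma sq_add2 a b : sq (a + b) <= 2 * sq a + 2 * sq b.
Proof.
have := sq_comb 1 1 a b; have := sq_comb 1 (-1) a b.
rewrite !scale1r scaleN1r => _ E; rewrite E.
have := sq_ge0 (a - b); have := sq_comb 1 (-1) a b.
rewrite !scale1r scaleN1r => -> /=. lra.
Qed.

Lemma core (K : set 'rV[R]_d) x c M eps : convexR K ->
  (forall z, K z -> c <= sq (x - z)) ->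
  (forall del, 0 < del -> exists2 z, K z & sq (x - z) < c + del) ->
  0 < eps -> eps <= 1 -> 0 <= M -> 0 <= c ->
  exists2 p, K p & forall y, K y -> sq (y - x) <= M ->
     sq (x - p) + sq (p - y) - eps <= sq (x - y).
Proof.
move=> cK lb ap e0 e1 M0 c0.
set L := 2 * M + 2 * (c + 1).
have L0 : 0 <= L by rewrite /L; lra.
set t := eps / (4 * (L + 1)).
have t0 : 0 < t by rewrite /t divr_gt0 //; lra.
have tL : t * (4 * (L + 1)) = eps by rewrite /t mulfVK //; lra.
have t1 : t <= 1 by nra.
have hd : 0 < t * eps / 2 by rewrite divr_gt0 // mulr_gt0.
have [p Kp Hp] := ap _ hd.
exists p => // y Ky HyM.
have Kz := @convex_comb K y p t cK Ky Kp (ltW t0) t1.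
have := lb _ Kz.
have -> : x - (t *: y + (1 - t) *: p) = 1 *: (x - p) + (- t) *: (y - p).
  by apply/rowP => i; rewrite !mxE; ring.
rewrite sq_comb.
have -> : x - y = 1 *: (x - p) + (- 1) *: (y - p).
  by apply/rowP => i; rewrite !mxE; ring.
rewrite sq_comb [sq (p - y)]sq_sym.
have := sq_add2 (y - x) (x - p).
have -> : y - x + (x - p) = y - p by apply/rowP => i; rewrite !mxE; ring.
move=> Hv Hz.
set D := dot _ _ in Hz *.
set U := sq (x - p) in Hp Hz Hv *.
set V := sq (y - p) in Hz Hv *.
have U0 : 0 <= U := sq_ge0 _.
have te : t * eps / 2 <= 1 by nra.
have HV : V <= L by rewrite /L; lra.
(* 2 t D <= U - c + t^2 V < t eps/2 + t^2 L *)
have h1 : 2 * t * D < t * eps / 2 + t ^+ 2 * L.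
  have : t ^+ 2 * V <= t ^+ 2 * L by rewrite ler_wpM2l // sqr_ge0.
  lra.
have h2 : t * L <= eps / 4 by nra.
have h3 : 2 * D < eps.
  have : t * (2 * D) < t * eps by nra.
  by rewrite ltr_pM2l.
lra.
Qed.

Lemma dist_facts x (K : set 'rV[R]_d) z0 r : 0 <= r -> K z0 ->
  (r%:E < dist_to_set x K)%E ->
  exists c0, [/\ r < c0, (forall z, K z -> c0 <= enorm (x - z)) &
    (forall del, 0 < del -> exists2 z, K z & enorm (x - z) < c0 + del)].
Proof.
move=> r0 Kz0 rD.
set D := dist_to_set x K in rD *.
have lbD z : K z -> (D <= (enorm (x - z))%:E)%E.
  by move=> Kz; apply: ereal_inf_lbound; exists z.
have Dfin : D \is a fin_num.
  rewrite ge0_fin_numE; last by apply: le_trans (ltW rD); rewrite lee_fin.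
  exact: le_lt_trans (lbD _ Kz0) (ltry _).
exists (fine D); split.
- by rewrite -lte_fin fineK.
- by move=> z Kz; rewrite -lee_fin fineK // lbD.
- move=> del del0.
  have : (D < (fine D + del)%:E)%E by rewrite -{1}(fineK Dfin) lte_fin ltrDl.
  case/ereal_inf_lt => _ [z Kz <-]; rewrite lte_fin => h.
  by exists z.
Qed.

Lemma sq_facts x (K : set 'rV[R]_d) c0 : 0 <= c0 ->
  (forall z, K z -> c0 <= enorm (x - z)) ->
  (forall del, 0 < del -> exists2 z, K z & enorm (x - z) < c0 + del) ->
  (forall z, K z -> c0 ^+ 2 <= sq (x - z)) /\
  (forall del, 0 < del -> exists2 z, K z & sq (x - z) < c0 ^+ 2 + del).
Proof.
move=> c00 lb ap; split.
  move=> z Kz; rewrite -enorm_sq; have := lb z Kz; have := enorm_ge0 (x - z); nra.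
move=> del del0.
set de := del / (2 * c0 + 1 + del).
have de0 : 0 < de by rewrite /de divr_gt0 //; lra.
have deE : de * (2 * c0 + 1 + del) = del by rewrite /de mulfVK //; lra.
have [z Kz h] := ap de de0.
exists z => //; rewrite -enorm_sq.
have := enorm_ge0 (x - z).
have de1 : de < 1 by nra.
nra.
Qed.
End H.

Unset Implicit Arguments.
Theorem theorem4p2 (R : realType) (d k : nat) (F : 'I_k -> set (set 'rV[R]_d))
    (b : 'rV[R]_d) :
  (0 < k)%N ->
  (forall i, finite_set (F i)) ->
  (forall i, F i !=set0) ->
  (forall i K, F i K -> convexR K) ->
  (forall T, family_transversal F T -> Kof T `&` eball b 1 !=set0) ->
  exists (i : 'I_k) (q : 'rV[R]_d),
    forall K, F i K -> (dist_to_set q K <= (1 / Num.sqrt (k%:R))%:E)%E.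
Proof.
move=> k0 Ffin Fne Fconv Htr.
set r := 1 / Num.sqrt (k%:R : R).
have kpos : 0 < k%:R :> R by rewrite ltr0n.
have r0 : 0 <= r by rewrite /r divr_ge0 // sqrtr_ge0.
have r2 : r ^+ 2 = k%:R^-1.
  by rewrite /r expr_div_n expr1n sqr_sqrtr ?ler0n // div1r.
apply: contrapT => Hneg.
have H i q : exists K, F i K /\ (r%:E < dist_to_set q K)%E.
  apply: contrapT => H1; apply: Hneg; exists i, q => K FK.
  rewrite leNgt; apply/negP => H2; apply: H1; by exists K.
have /choice [T0 HT0] : forall i, exists K, F i K := fun i => Fne i.
have main : forall n, (n <= k)%N -> exists T x s,
   [/\ (forall i, F i (T i)), n%:R <= s * k%:R, ((0 < n)%N -> n%:R < s * k%:R) &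
    forall y, (forall i : 'I_k, (i < n)%N -> T i y) -> sq (y - b) <= 1 ->
      s + sq (x - y) <= sq (b - y)].
  elim=> [|n IH] Hn.
    exists T0, b, 0; split => //; first by rewrite mul0r.
    by move=> y _ _; rewrite add0r.
  have [T [x [s [HT Hs1 Hs2 Hy]]]] := IH (ltnW Hn).
  pose i : 'I_k := Ordinal Hn.
  have [K [FK HK]] := H i x.
  pose T' := fun j : 'I_k => if val j == n then K else T j.
  have HT' : forall j, F j (T' j).
    move=> j; rewrite /T'; case: eqP => [jn|_]; last exact: HT.
    by have -> : j = i by apply/val_inj.
  have TK : forall y, (forall j : 'I_k, (j < n.+1)%N -> T' j y) -> K y.
    by move=> y /(_ i (ltnSn n)); rewrite /T' /= eqxx.
  have TT : forall y, (forall j : 'I_k, (j < n.+1)%N -> T' j y) ->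
      forall j : 'I_k, (j < n)%N -> T j y.
    move=> y Hall j jn; have := Hall j (ltnW jn).
    by rewrite /T' (_ : (val j == n) = false) //; apply/negbTE; rewrite neq_ltn jn.
  have [[z0 Kz0]|Kem] := pselect (exists z, K z); last first.
    exists T', x, (s + 2 / k%:R); split => //.
    - rewrite mulrDl mulfVK; last by rewrite gt_eqF.
      rewrite -natr1; lra.
    - move=> _; rewrite mulrDl mulfVK; last by rewrite gt_eqF.
      rewrite -natr1; lra.
    - by move=> y /TK Ky; exfalso; apply: Kem; exists y.
  have [c0 [rc0 lb0 ap0]] := dist_facts r0 Kz0 HK.
  have c00 : 0 <= c0 by apply: le_trans r0 (ltW rc0).
  have [lb ap] := sq_facts c00 lb0 ap0.
  set c := c0 ^+ 2 in lb ap.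
  have rc : k%:R^-1 < c by rewrite -r2 /c; nra.
  pose eps := Num.min 1 ((c - k%:R^-1) / 2).
  have e0 : 0 < eps by rewrite /eps lt_min ltr01 /=; lra.
  have e1 : eps <= 1 by rewrite /eps ge_min lexx.
  have e2 : eps < c - k%:R^-1.
    by rewrite /eps gt_min; apply/orP; right; lra.
  have M0 : 0 <= 2 + 2 * sq (b - x) by have := sq_ge0 (b - x); lra.
  have c0' : 0 <= c by rewrite /c sqr_ge0.
  have [p Kp Hp] := core (Fconv _ _ FK) lb ap e0 e1 M0 c0'.
  have Hc : 1 < (sq (x - p) - eps) * k%:R.
    have h : k%:R^-1 < sq (x - p) - eps by have := lb p Kp; lra.
    by rewrite -(ltr_pM2r kpos) mulVf ?gt_eqF in h.
  exists T', p, (s + sq (x - p) - eps); split => //.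
  - rewrite -addrA mulrDl -natr1; lra.
  - move=> _; rewrite -addrA mulrDl -natr1; lra.
  - move=> y Hall hb.
    have Ky := TK y Hall.
    have h1 := Hy y (TT y Hall) hb.
    have hM : sq (y - x) <= 2 + 2 * sq (b - x).
      have := sq_add2 (y - b) (b - x).
      have -> : y - b + (b - x) = y - x by apply/rowP => j; rewrite !mxE; ring.
      lra.
    have h2 := Hp y Ky hM.
    lra.
have [T [x [s [HT _ Hs Hy]]]] := main k (leqnn k).
have [y [Ky By]] := Htr T HT.
have hb : sq (y - b) <= 1.
  rewrite -enorm_sq; have := enorm_ge0 (y - b); move: By; rewrite /eball /= => By; nra.
have s1 : 1 < s.
  have := Hs k0; rewrite -{1}(mul1r k%:R) ltr_pM2r //.
have := Hy y (fun i _ => Ky i I) hb.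
rewrite sq_sym; have := sq_ge0 (x - y); lra.
Qed.
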